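(* Let $n\ge 2$ and let $P$ be an $n\times n$ permutation matrix which is the leaf matrix of exactly one CNM of size $n$. Then for every $k$ with $2\le k\le n-1$, the $k$-th L-subset of $P$ contains exactly one entry equal to $1$.
   Context: A complete non-ambiguous matrix (CNM) of size $n$ is an $n\times n$ matrix $M=(m_{i,j})$ with entries in $\{0,1\}$ whose support $T=\{(i,j): m_{i,j}=1\}$ (whose elements are called vertices) satisfies: (1) $(1,1)\in T$; (2) for every $p=(i,j)\in T$ with $p\neq(1,1)$, exactly one of the following holds: there is $(i',j)\in T$ with $i'<i$, or there is $(i,j')\in T$ with $j'<j$; (3) every row and every column of $M$ contains at least one vertex; (4) define the parent of $p=(i,j)\neq(1,1)$ to be $(i',j)$ with $i'<i$ maximal if such a vertex exists, and otherwise $(i,j')$ with $j'<j$ maximal; then every vertex is the parent of either zero or exactly two vertices. A vertex with no children is a leaf. The leaf matrix $p(M)$ is obtained from $M$ by replacing all non-leaf vertices by $0$ (it is a permutation matrix). For an $n\times n$ matrix and $k>1$, the $k$-th L-subset is the set of positions $\{(i,j): (i=k \text{ and } j\le k) \text{ or } (j=k \text{ and } i\le k)\}$. *)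

(* Defs.v *)
From mathcomp Require Import all_boot all_order all_algebra.
Set Implicit Arguments. Unset Strict Implicit. Unset Printing Implicit Defensive.
Import GRing.Theory Num.Theory.
Local Open Scope ring_scope.

(* Positions are pairs (i,j) : 'I_n * 'I_n, 0-based; the paper's (1,1) is
   the position with val i = 0 and val j = 0. Matrices have int entries. *)
Section CNM.
Variable n : nat.
Implicit Types (M : 'M[int]_n) (T : {set 'I_n * 'I_n}) (p q r : 'I_n * 'I_n).

Definition support M : {set 'I_n * 'I_n} := [set p | M p.1 p.2 == 1].

Definition is_root p : bool := (val p.1 == 0%N) && (val p.2 == 0%N).

Definition has_above T p : bool :=
  [exists q in T, (q.2 == p.2) && (val q.1 < val p.1)%N].
Definition has_left T p : bool :=
  [exists q in T, (q.1 == p.1) && (val q.2 < val p.2)%N].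

Definition is_parent T p q : bool :=
  [&& p \in T, q \in T, ~~ is_root q &
   if has_above T q then
     [&& p.2 == q.2, (val p.1 < val q.1)%N &
      [forall r in T, ((r.2 == q.2) && (val r.1 < val q.1)%N) ==> (val r.1 <= val p.1)%N]]
   else
     [&& p.1 == q.1, (val p.2 < val q.2)%N &
      [forall r in T, ((r.1 == q.1) && (val r.2 < val q.2)%N) ==> (val r.2 <= val p.2)%N]]].

Definition children T p : {set 'I_n * 'I_n} := [set q | is_parent T p q].

Definition is_cnm M : bool :=
  let T := support M in
  [&& [forall i, forall j, (M i j == 0) || (M i j == 1)],
      [exists p in T, is_root p],
      [forall p in T, ~~ is_root p ==> addb (has_above T p) (has_left T p)],
      [forall i, exists j, M i j == 1],
      [forall j, exists i, M i j == 1] &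
      [forall p in T, (#|children T p| == 0)%N || (#|children T p| == 2)%N]].

Definition is_leaf M p : bool :=
  (p \in support M) && (#|children (support M) p| == 0)%N.

Definition leaf_mx M : 'M[int]_n :=
  \matrix_(i, j) (if is_leaf M (i, j) then 1 else 0).

(* k-th L-subset, k given in the paper's 1-based convention *)
Definition Lsubset (k : nat) : {set 'I_n * 'I_n} :=
  [set p | ((val p.1).+1 == k) && ((val p.2).+1 <= k)%N
        || ((val p.2).+1 == k) && ((val p.1).+1 <= k)%N].
End CNM.

(* Main.v *)
Require Import Defs.
From mathcomp Require Import all_boot all_order all_algebra.
From mathcomp Require Import fingroup perm zify.
Set Implicit Arguments. Unset Strict Implicit. Unset Printing Implicit Defensive.


Section Aux.
Variable n : nat.
Notation pos := ('I_n * 'I_n)%type.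
Implicit Types (T : {set pos}) (p q r v w : pos).

Definition hb T p := [exists q in T, (q.2 == p.2) && (nat_of_ord p.1 < nat_of_ord q.1)].
Definition hr T p := [exists q in T, (q.1 == p.1) && (nat_of_ord p.2 < nat_of_ord q.2)].

Definition Xc T := forall p, p \in T -> ~~ is_root p -> addb (has_above T p) (has_left T p).
Definition good T :=
  [/\ exists2 p, p \in T & is_root p, Xc T,
      (forall p, p \in T -> hb T p = hr T p),
      (forall i, exists j, (i, j) \in T) & (forall j, exists i, (i, j) \in T)].

Lemma exmin (A : pred pos) (f : pos -> nat) q0 :
  A q0 -> exists2 q, A q & forall r, A r -> f q <= f r.
Proof. by move=> Aq0; case: (arg_minnP f Aq0) => q Aq Hq; exists q. Qed.

Lemma pos_eq p q : nat_of_ord p.1 = nat_of_ord q.1 -> nat_of_ord p.2 = nat_of_ord q.2 -> p = q.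
Proof. by case: p q => [a b] [c d] /= /val_inj -> /val_inj ->. Qed.

Lemma nonroot_row p : 0 < nat_of_ord p.1 -> ~~ is_root p.
Proof. by case: p => [[a ha] b]; rewrite /is_root /=; case: a ha. Qed.
Lemma nonroot_col p : 0 < nat_of_ord p.2 -> ~~ is_root p.
Proof. by case: p => [a [b hb]]; rewrite /is_root /= andbC; case: b hb. Qed.

Lemma aboveP T p : reflect (exists2 q : pos, q \in T & q.2 = p.2 /\ nat_of_ord q.1 < nat_of_ord p.1) (has_above T p).
Proof.
apply: (iffP existsP) => [[q /andP[qT /andP[/eqP e l]]]|[q qT [e l]]]; first by exists q.
by exists q; rewrite qT e eqxx l.
Qed.
Lemma leftP T p : reflect (exists2 q : pos, q \in T & q.1 = p.1 /\ nat_of_ord q.2 < nat_of_ord p.2) (has_left T p).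
Proof.
apply: (iffP existsP) => [[q /andP[qT /andP[/eqP e l]]]|[q qT [e l]]]; first by exists q.
by exists q; rewrite qT e eqxx l.
Qed.
Lemma belowP T p : reflect (exists2 q : pos, q \in T & q.2 = p.2 /\ nat_of_ord p.1 < nat_of_ord q.1) (hb T p).
Proof.
apply: (iffP existsP) => [[q /andP[qT /andP[/eqP e l]]]|[q qT [e l]]]; first by exists q.
by exists q; rewrite qT e eqxx l.
Qed.
Lemma rightP T p : reflect (exists2 q : pos, q \in T & q.1 = p.1 /\ nat_of_ord p.2 < nat_of_ord q.2) (hr T p).
Proof.
apply: (iffP existsP) => [[q /andP[qT /andP[/eqP e l]]]|[q qT [e l]]]; first by exists q.
by exists q; rewrite qT e eqxx l.
Qed.

Section Children.
Variable T : {set pos}.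
Hypothesis XT : Xc T.

Lemma parent_below p q : is_parent T p q -> has_above T q ->
  [/\ p \in T, q \in T, p.2 = q.2, nat_of_ord p.1 < nat_of_ord q.1 &
   forall r, r \in T -> r.2 = q.2 -> nat_of_ord r.1 < nat_of_ord q.1 -> nat_of_ord r.1 <= nat_of_ord p.1].
Proof.
rewrite /is_parent => /and4P[pT qT _]; move=> + ha; rewrite ha.
case/and3P => /eqP e l /forallP F; split => // r rT er lr.
by move: (F r); rewrite rT er eqxx lr.
Qed.

Lemma parent_right p q : is_parent T p q -> ~~ has_above T q ->
  [/\ p \in T, q \in T, p.1 = q.1, nat_of_ord p.2 < nat_of_ord q.2 &
   forall r, r \in T -> r.1 = q.1 -> nat_of_ord r.2 < nat_of_ord q.2 -> nat_of_ord r.2 <= nat_of_ord p.2].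
Proof.
rewrite /is_parent => /and4P[pT qT _]; move=> + ha; rewrite (negbTE ha).
case/and3P => /eqP e l /forallP F; split => // r rT er lr.
by move: (F r); rewrite rT er eqxx lr.
Qed.

Lemma below_child p : p \in T -> hb T p ->
  exists q, is_parent T p q /\ has_above T q.
Proof.
move=> pT /belowP[q0 q0T [e0 l0]].
case: (@exmin (fun q => (q \in T) && ((q.2 == p.2) && (nat_of_ord p.1 < nat_of_ord q.1))) (fun q => nat_of_ord q.1) q0)
  => [|q /andP[qT /andP[/eqP e l]] mn]; first by rewrite q0T e0 eqxx l0.
have ha : has_above T q by apply/aboveP; exists p.
exists q; split => //.
have nr : ~~ is_root q by apply: nonroot_row; lia.
rewrite /is_parent pT qT nr /=.
rewrite ha e eqxx l /=; apply/forallP => r; apply/implyP => rT; apply/implyP => /andP[/eqP er lr].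
rewrite leqNgt; apply/negP => lpr.
move: (mn r); rewrite rT er eqxx lpr /=; move/(_ isT); lia.
Qed.

Lemma right_child p : p \in T -> hr T p ->
  exists q, is_parent T p q /\ ~~ has_above T q.
Proof.
move=> pT /rightP[q0 q0T [e0 l0]].
case: (@exmin (fun q => (q \in T) && ((q.1 == p.1) && (nat_of_ord p.2 < nat_of_ord q.2))) (fun q => nat_of_ord q.2) q0)
  => [|q /andP[qT /andP[/eqP e l]] mn]; first by rewrite q0T e0 eqxx l0.
have nr : ~~ is_root q by apply: nonroot_col; lia.
have hl : has_left T q by apply/leftP; exists p.
have na : ~~ has_above T q by move: (XT qT nr); rewrite hl addbT.
exists q; split => //.
rewrite /is_parent pT qT nr /= (negbTE na) e eqxx l /=.
apply/forallP => r; apply/implyP => rT; apply/implyP => /andP[/eqP er lr].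
rewrite leqNgt; apply/negP => lpr.
move: (mn r); rewrite rT er eqxx lpr /=; move/(_ isT); lia.
Qed.

Lemma card_children p : p \in T -> #|children T p| = hb T p + hr T p.
Proof.
move=> pT.
have -> : children T p = [set q | is_parent T p q & has_above T q] :|:
                         [set q | is_parent T p q & ~~ has_above T q].
  by apply/setP => q; rewrite !inE; case: (has_above T q); rewrite ?andbT ?andbF ?orbF.
rewrite cardsU.
have -> : [set q | is_parent T p q & has_above T q] :&: [set q | is_parent T p q & ~~ has_above T q] = set0.
  by apply/setP => q; rewrite !inE; case: (has_above T q); rewrite ?andbF ?andbT ?andNb.
rewrite cards0 subn0; congr (_ + _).
- case hbp: (hb T p).
  + have [q [pq ha]] := below_child pT hbp.
    suff -> : [set q | is_parent T p q & has_above T q] = [set q] by rewrite cards1.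
    apply/setP => q'; rewrite !inE; apply/andP/eqP => [[pq' ha']|->]; last by [].
    have [_ qT e l mn] := parent_below pq ha.
    have [_ q'T e' l' mn'] := parent_below pq' ha'.
    apply: pos_eq; last by rewrite -e -e'.
    have h1 := mn q' q'T; have h2 := mn' q qT.
    move: h1 h2; rewrite -e -e' => h1 h2.
    have := h1 (erefl _); have := h2 (erefl _). lia.
  + apply/eqP; rewrite cards_eq0; apply/eqP/setP => q; rewrite !inE.
    apply/negP => /andP[pq ha]; have [_ qT e l _] := parent_below pq ha.
    suff: hb T p by rewrite hbp.
    by apply/belowP; exists q.
- case hrp: (hr T p).
  + have [q [pq ha]] := right_child pT hrp.
    suff -> : [set q | is_parent T p q & ~~ has_above T q] = [set q] by rewrite cards1.
    apply/setP => q'; rewrite !inE; apply/andP/eqP => [[pq' ha']|->]; last by [].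
    have [_ qT e l mn] := parent_right pq ha.
    have [_ q'T e' l' mn'] := parent_right pq' ha'.
    apply: pos_eq; first by rewrite -e -e'.
    have h1 := mn q' q'T; have h2 := mn' q qT.
    move: h1 h2; rewrite -e -e' => h1 h2.
    have := h1 (erefl _); have := h2 (erefl _). lia.
  + apply/eqP; rewrite cards_eq0; apply/eqP/setP => q; rewrite !inE.
    apply/negP => /andP[pq ha]; have [_ qT e l _] := parent_right pq ha.
    suff: hr T p by rewrite hrp.
    by apply/rightP; exists q.
Qed.
End Children.
End Aux.
Lemma root_vals (n : nat) (p : 'I_n * 'I_n) : is_root p -> nat_of_ord p.1 = 0 /\ nat_of_ord p.2 = 0.
Proof. by case/andP => /eqP a /eqP b. Qed.


Section Aux2.
Variable n : nat.
Notation pos := ('I_n * 'I_n)%type.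
Implicit Types (T : {set pos}) (p q r v w : pos).

Definition mxT T : 'M[int]_n := \matrix_(i, j) (if (i, j) \in T then 1%R else 0%R).

Lemma support_mxT T : Defs.support (mxT T) = T.
Proof.
apply/setP => [[i j]]; rewrite /Defs.support inE mxE /=.
by case: ((i, j) \in T).
Qed.

Lemma cnm_good (M : 'M[int]_n) : is_cnm M -> good (Defs.support M).
Proof.
rewrite /is_cnm /= => /and5P[_ /existsP[r /andP[rT rr]] /forallP X /forallP R /andP[/forallP C /forallP K]].
split.
- by exists r.
- by move=> p pT nr; move: (X p); rewrite pT nr.
- move=> p pT; move: (K p); rewrite pT /= card_children //; last first.
    by move=> q qT nr; move: (X q); rewrite qT nr.
  by case: (hb _ p); case: (hr _ p).
- move=> i; have /existsP[j e] := R i; exists j; by rewrite inE.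
- move=> j; have /existsP[i e] := C j; exists i; by rewrite inE.
Qed.

Lemma leafE (M : 'M[int]_n) p : good (Defs.support M) ->
  is_leaf M p = (p \in Defs.support M) && ~~ hb (Defs.support M) p.
Proof.
case=> _ X B _ _; rewrite /is_leaf; case pT: (p \in Defs.support M) => //=.
rewrite card_children // (B p pT); by case: (hr _ p).
Qed.

Lemma good_cnm T : good T -> is_cnm (mxT T).
Proof.
move=> G; have := G; case=> [[r rT rr] X B R C].
rewrite /is_cnm /= support_mxT; apply/and5P; split.
- apply/forallP => i; apply/forallP => j; rewrite mxE; by case: ((i, j) \in T).
- by apply/existsP; exists r; rewrite rT.
- by apply/forallP => p; apply/implyP => pT; apply/implyP => nr; apply: X.
- apply/forallP => i; have [j e] := R i; apply/existsP; exists j; by rewrite mxE e.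
apply/andP; split.
- apply/forallP => j; have [i e] := C j; apply/existsP; exists i; by rewrite mxE e.
apply/forallP => p; apply/implyP => pT; rewrite card_children // (B p pT).
by case: (hr _ p).
Qed.

Definition swp p : pos := (p.2, p.1).
Definition trs T := [set p | swp p \in T].
Lemma in_trs T p : (p \in trs T) = (swp p \in T).
Proof. by rewrite inE. Qed.
Lemma swpK p : swp (swp p) = p. Proof. by case: p. Qed.
Lemma trsK T : trs (trs T) = T.
Proof. by apply/setP => p; rewrite !inE swpK. Qed.

Lemma above_trs T p : has_above (trs T) p = has_left T (swp p).
Proof.
apply/aboveP/leftP => [[q qT [e l]]|[q qT [e l]]].
- by exists (swp q); rewrite -?in_trs //.
- by exists (swp q); rewrite ?in_trs ?swpK //.
Qed.
Lemma left_trs T p : has_left (trs T) p = has_above T (swp p).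
Proof.
apply/leftP/aboveP => [[q qT [e l]]|[q qT [e l]]].
- by exists (swp q); rewrite -?in_trs //.
- by exists (swp q); rewrite ?in_trs ?swpK //.
Qed.
Lemma hb_trs T p : hb (trs T) p = hr T (swp p).
Proof.
apply/belowP/rightP => [[q qT [e l]]|[q qT [e l]]].
- by exists (swp q); rewrite -?in_trs //.
- by exists (swp q); rewrite ?in_trs ?swpK //.
Qed.
Lemma hr_trs T p : hr (trs T) p = hb T (swp p).
Proof.
apply/rightP/belowP => [[q qT [e l]]|[q qT [e l]]].
- by exists (swp q); rewrite -?in_trs //.
- by exists (swp q); rewrite ?in_trs ?swpK //.
Qed.
Lemma root_swp p : is_root (swp p) = is_root p.
Proof. by rewrite /is_root andbC. Qed.

Lemma good_trs T : good T -> good (trs T).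
Proof.
case=> [[r rT rr] X B R C]; split.
- by exists (swp r); rewrite ?in_trs ?swpK ?root_swp.
- move=> p pT nr; rewrite above_trs left_trs addbC; apply: X; rewrite -?in_trs ?root_swp //.
- by move=> p pT; rewrite hb_trs hr_trs B // -in_trs.
- move=> i; have [j e] := C i; exists j; by rewrite in_trs.
- move=> j; have [i e] := R j; exists i; by rewrite in_trs.
Qed.
End Aux2.


Ltac ovals := repeat match goal with
 | H : @eq ?A _ _ |- _ => lazymatch A with nat => fail | _ => apply (f_equal (@nat_of_ord _)) in H end
 end.
Ltac cl := repeat match goal with
 | H : ?t |- _ => lazymatch t with
     | is_true (leq _ _) => fail
     | @eq nat _ _ => fail
     | not (@eq nat _ _) => fail
     | not (is_true (leq _ _)) => fail
     | _ => clear H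
   end
 end.
Ltac ll := ovals; cl; lia.
Ltac sp := refine (conj _ _).

Section Moves.
Variable n : nat.
Notation pos := ('I_n * 'I_n)%type.
Implicit Types (T : {set pos}) (p q r v w b u : pos).

Lemma neq_pos p q : nat_of_ord p.1 <> nat_of_ord q.1 \/ nat_of_ord p.2 <> nat_of_ord q.2 -> p != q.
Proof. by move=> h; apply/eqP => e; rewrite e in h; case: h. Qed.

Lemma moveA T v b w : good T -> v \in T -> has_left T v -> b \in T ->
  b.2 = v.2 -> b.1 > v.1 ->
  (forall r : pos, r \in T -> r.2 = v.2 -> v.1 < r.1 -> b.1 <= r.1) ->
  w.1 = b.1 -> w.2 < v.2 ->
  (exists2 u : pos, u \in T & u.2 = w.2 /\ u.1 < b.1) ->
  (exists2 u : pos, u \in T & u.2 = w.2 /\ b.1 < u.1) ->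
  [/\ good (w |: (T :\ v)),
      (forall p, (p \in w |: (T :\ v)) && ~~ hb (w |: (T :\ v)) p = (p \in T) && ~~ hb T p)
    & w |: (T :\ v) != T].
Proof.
move=> G vT hlv bT eb lvb near ew1 lc [u1 u1T [e1 l1]] [u2 u2T [e2 l2]].
have [T' eT'] : {T' | T' = w |: (T :\ v)} by exists (w |: (T :\ v)).
rewrite -eT'.
have G' := G; case: G' => [[rt rtT rtr] X B R C].
have [pp ppT [epp lpp]] := leftP _ _ hlv.
have nrv : ~~ is_root v by apply: nonroot_col; ll.
have nav : ~~ has_above T v by move: (X v vT nrv); rewrite hlv addbT.
have hab : has_above T b by apply/aboveP; exists v; [exact vT | sp; [by rewrite eb | ll]].
have nrb : ~~ is_root b by apply: nonroot_row; ll.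
have nlb : ~~ has_left T b by move: (X b bT nrb); rewrite hab.
have hbv : hb T v by apply/belowP; exists b; [exact bT | sp; [exact eb | ll]].
have hrv : hr T v by rewrite -B.
have [rr rrT [err lrr]] := rightP _ _ hrv.
have wnT : w \notin T.
  apply/negP => wT; move/negP: nlb; apply; apply/leftP; exists w; first exact wT.
  sp; [exact ew1 | ll].
have wv : w != v by apply: neq_pos; right; ll.
have bv : b != v by apply: neq_pos; left; ll.
have ppv : pp != v by apply: neq_pos; right; ll.
have inT' p : (p \in T') = (p == w) || ((p != v) && (p \in T)).
  by rewrite eT' in_setU in_set1 in_setD1.
have inT2 p : p != v -> p \in T -> p \in T'.
  by move=> pv pT; rewrite inT' pv pT orbT.
have wT' : w \in T' by rewrite inT' eqxx.
have Hhb p : p \in T -> p != v -> hb T' p = hb T p.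
  move=> pT pv; apply/belowP/belowP => [[q qT [e l]]|[q qT [e l]]].
  - move: qT; rewrite inT' => /orP[/eqP qw|/andP[_ qT]]; last first.
      exists q; [exact qT | exact (conj e l)].
    rewrite qw in e l; exists u2; [exact u2T | sp; [by rewrite e2 -e | ll]].
  - exists q; last exact (conj e l).
    apply: inT2 qT; apply/eqP => qv.
    move/negP: nav; apply; apply/aboveP; exists p; first exact pT.
    rewrite -qv; sp; [by rewrite e | ll].
have Hhr p : p \in T -> p != v -> hr T' p = hr T p.
  move=> pT pv; apply/rightP/rightP => [[q qT [e l]]|[q qT [e l]]].
  - move: qT; rewrite inT' => /orP[/eqP qw|/andP[_ qT]]; last first.
      exists q; [exact qT | exact (conj e l)].
    rewrite qw in e l; exfalso; move/negP: nlb; apply; apply/leftP.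
    exists p; [exact pT | sp; [by rewrite -e ew1 | ll]].
  - case: (eqVneq q v) => [qv|qv]; last first.
      exists q; [exact (inT2 _ qv qT) | exact (conj e l)].
    rewrite qv in e l; exists rr; first by apply: (inT2 _ _ rrT); apply: neq_pos; right; ll.
    sp; [by rewrite err | ll].
have Ha p : p \in T -> p != v -> p != b -> has_above T' p = has_above T p.
  move=> pT pv pb; apply/aboveP/aboveP => [[q qT [e l]]|[q qT [e l]]].
  - move: qT; rewrite inT' => /orP[/eqP qw|/andP[_ qT]]; last first.
      exists q; [exact qT | exact (conj e l)].
    rewrite qw in e l; exists u1; [exact u1T | sp; [by rewrite e1 | ll]].
  - case: (eqVneq q v) => [qv|qv]; last first.
      exists q; [exact (inT2 _ qv qT) | exact (conj e l)].
    rewrite qv in e l; have := near p pT (esym e) l => hb1.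
    exists b; first exact (inT2 _ bv bT).
    sp; first by rewrite eb e.
    have : nat_of_ord b.1 <> nat_of_ord p.1.
      move=> eb1; move/negP: pb; apply; apply/eqP; apply: pos_eq; first by rewrite eb1.
      by ovals; rewrite eb e.
    ll.
have Hl p : p \in T -> p != v -> p != b -> has_left T' p = has_left T p.
  move=> pT pv pb; apply/leftP/leftP => [[q qT [e l]]|[q qT [e l]]].
  - move: qT; rewrite inT' => /orP[/eqP qw|/andP[_ qT]]; last first.
      exists q; [exact qT | exact (conj e l)].
    rewrite qw in e l.
    have [h1|h2] : nat_of_ord p.2 < nat_of_ord b.2 \/ nat_of_ord b.2 <= nat_of_ord p.2 by ll.
      exfalso; move/negP: nlb; apply; apply/leftP.
      exists p; [exact pT | sp; [by rewrite -e ew1 | exact h1]].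
    have h3 : nat_of_ord b.2 <> nat_of_ord p.2.
      move=> eb2; move/negP: pb; apply; apply/eqP; apply: pos_eq; last by rewrite eb2.
      by ovals; rewrite -e ew1.
    exists b; [exact bT | sp; [by rewrite -e ew1 | ll]].
  - case: (eqVneq q v) => [qv|qv]; last first.
      exists q; [exact (inT2 _ qv qT) | exact (conj e l)].
    rewrite qv in e l; exists pp; first exact (inT2 _ ppv ppT).
    sp; [by rewrite epp | ll].
have hbw : hb T' w.
  apply/belowP; exists u2; first by apply: (inT2 _ _ u2T); apply: neq_pos; right; ll.
  sp; [exact e2 | ll].
have hrw : hr T' w.
  apply/rightP; exists b; [exact (inT2 _ bv bT) | sp; [by rewrite ew1 | ll]].
have aw : has_above T' w.
  apply/aboveP; exists u1; first by apply: (inT2 _ _ u1T); apply: neq_pos; right; ll.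
  sp; [exact e1 | ll].
have nlw : ~~ has_left T' w.
  apply/negP => /leftP[q qT [e l]]; move: qT; rewrite inT' => /orP[/eqP qw|/andP[_ qT]].
    rewrite qw in l; ll.
  move/negP: nlb; apply; apply/leftP; exists q; [exact qT | sp; [by rewrite e ew1 | ll]].
have nab : ~~ has_above T' b.
  apply/negP => /aboveP[q qT [e l]]; move: qT; rewrite inT' => /orP[/eqP qw|/andP[qv qT]].
    rewrite qw ew1 in l; ll.
  have [h1|[h2|h3]] : nat_of_ord q.1 < nat_of_ord v.1 \/ nat_of_ord q.1 = nat_of_ord v.1 \/
                      nat_of_ord v.1 < nat_of_ord q.1 by ll.
  - move/negP: nav; apply; apply/aboveP; exists q; [exact qT | sp; [by rewrite e eb | exact h1]].
  - move/negP: qv; apply; apply/eqP; apply: pos_eq; first exact h2. by ovals; rewrite e eb.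
  - have := near q qT (etrans e eb) h3; ll.
have hlb : has_left T' b.
  apply/leftP; exists w; [exact wT' | sp; [exact ew1 | ll]].
have bT' : b \in T' by exact (inT2 _ bv bT).
split.
- split.
  + exists rt; last exact rtr. apply: inT2 rtT; apply: neq_pos; right.
    have := root_vals rtr; ll.
  + move=> p; rewrite inT' => /orP[/eqP ->|/andP[pv pT]] nrp.
      by rewrite aw (negbTE nlw).
    case: (eqVneq p b) => [->|pb]; first by rewrite (negbTE nab) hlb.
    rewrite Ha // Hl //; exact (X p pT nrp).
  + move=> p; rewrite inT' => /orP[/eqP ->|/andP[pv pT]].
      by rewrite hbw hrw.
    by rewrite Hhb // Hhr // B.
  + move=> i; have [j e] := R i; case: (eqVneq (i, j) v) => [ev|nv]; last first.
      by exists j; apply: inT2.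
    exists pp.2; have -> : (i, pp.2) = pp.
      apply: pos_eq => //=; have := f_equal (fun x : pos => nat_of_ord x.1) ev; simpl.
      by move=> ->; ovals; rewrite epp.
    exact (inT2 _ ppv ppT).
  + move=> j; have [i e] := C j; case: (eqVneq (i, j) v) => [ev|nv]; last first.
      by exists i; apply: inT2.
    exists b.1; have -> : (b.1, j) = b.
      apply: pos_eq => //=; have := f_equal (fun x : pos => nat_of_ord x.2) ev; simpl.
      by move=> ->; ovals; rewrite eb.
    exact bT'.
- move=> p; case: (eqVneq p w) => [->|pw].
    by rewrite wT' hbw (negbTE wnT).
  case: (eqVneq p v) => [->|pv].
    have vw : v != w by rewrite eq_sym.
    by rewrite inT' (negbTE vw) eqxx /= vT hbv.
  rewrite inT' (negbTE pw) pv /=; case pT: (p \in T) => //=.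
  by rewrite Hhb.
- apply/negP => /eqP e; move/negP: wnT; apply; rewrite -e; exact wT'.
Qed.

Lemma moveC T v w : good T -> v \in T -> has_above T v -> hb T v ->
  w.1 = v.1 -> nat_of_ord w.2 <> nat_of_ord v.2 ->
  (forall q : pos, q \in T -> q.1 = v.1 -> q != v -> w.2 < q.2) ->
  (exists2 u : pos, u \in T & u.2 = w.2 /\ u.1 < v.1) ->
  (exists2 u : pos, u \in T & u.2 = w.2 /\ v.1 < u.1) ->
  [/\ good (w |: (T :\ v)),
      (forall p, (p \in w |: (T :\ v)) && ~~ hb (w |: (T :\ v)) p = (p \in T) && ~~ hb T p)
    & w |: (T :\ v) != T].
Proof.
move=> G vT hav hbv ew1 nw2 rowr [u1 u1T [e1 l1]] [u2 u2T [e2 l2]].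
have [T' eT'] : {T' | T' = w |: (T :\ v)} by exists (w |: (T :\ v)).
rewrite -eT'.
have G' := G; case: G' => [[rt rtT rtr] X B R C].
have [a aT [ea la]] := aboveP _ _ hav.
have nrv : ~~ is_root v by apply: nonroot_row; ll.
have nlv : ~~ has_left T v by move: (X v vT nrv); rewrite hav.
have hrv : hr T v by rewrite -B.
have [rr rrT [err lrr]] := rightP _ _ hrv.
have [bb bbT [ebb lbb]] := belowP _ _ hbv.
have wv : w != v by apply: neq_pos; right.
have rrv : rr != v by apply: neq_pos; right; ll.
have bbv : bb != v by apply: neq_pos; left; ll.
have av : a != v by apply: neq_pos; left; ll.
have wrr := rowr rr rrT err rrv.
have wnT : w \notin T.
  apply/negP => wT; have := rowr w wT ew1 wv; ll.
have inT' p : (p \in T') = (p == w) || ((p != v) && (p \in T)).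
  by rewrite eT' in_setU in_set1 in_setD1.
have inT2 p : p != v -> p \in T -> p \in T'.
  by move=> pv pT; rewrite inT' pv pT orbT.
have wT' : w \in T' by rewrite inT' eqxx.
have Hhb p : p \in T -> p != v -> hb T' p = hb T p.
  move=> pT pv; apply/belowP/belowP => [[q qT [e l]]|[q qT [e l]]].
  - move: qT; rewrite inT' => /orP[/eqP qw|/andP[_ qT]]; last first.
      exists q; [exact qT | exact (conj e l)].
    rewrite qw in e l; exists u2; [exact u2T | sp; [by rewrite e2 -e | ll]].
  - case: (eqVneq q v) => [qv|qv]; last first.
      exists q; [exact (inT2 _ qv qT) | exact (conj e l)].
    rewrite qv in e l; exists bb; first exact (inT2 _ bbv bbT).
    sp; [by rewrite ebb | ll].
have Hhr p : p \in T -> p != v -> hr T' p = hr T p.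
  move=> pT pv; apply/rightP/rightP => [[q qT [e l]]|[q qT [e l]]].
  - move: qT; rewrite inT' => /orP[/eqP qw|/andP[_ qT]]; last first.
      exists q; [exact qT | exact (conj e l)].
    rewrite qw in e l; exfalso; have := rowr p pT (etrans (esym e) ew1) pv; ll.
  - case: (eqVneq q v) => [qv|qv]; last first.
      exists q; [exact (inT2 _ qv qT) | exact (conj e l)].
    rewrite qv in e l; exfalso; move/negP: nlv; apply; apply/leftP.
    exists p; [exact pT | sp; [by rewrite e | ll]].
have Ha p : p \in T -> p != v -> has_above T' p = has_above T p.
  move=> pT pv; apply/aboveP/aboveP => [[q qT [e l]]|[q qT [e l]]].
  - move: qT; rewrite inT' => /orP[/eqP qw|/andP[_ qT]]; last first.
      exists q; [exact qT | exact (conj e l)].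
    rewrite qw in e l; exists u1; [exact u1T | sp; [by rewrite e1 | ll]].
  - case: (eqVneq q v) => [qv|qv]; last first.
      exists q; [exact (inT2 _ qv qT) | exact (conj e l)].
    rewrite qv in e l; exists a; first exact (inT2 _ av aT).
    sp; [by rewrite ea | ll].
have Hl p : p \in T -> p != v -> has_left T' p = has_left T p.
  move=> pT pv; apply/leftP/leftP => [[q qT [e l]]|[q qT [e l]]].
  - move: qT; rewrite inT' => /orP[/eqP qw|/andP[_ qT]]; last first.
      exists q; [exact qT | exact (conj e l)].
    rewrite qw in e l.
    have [h1|[h2|h3]] : nat_of_ord p.2 < nat_of_ord v.2 \/ nat_of_ord p.2 = nat_of_ord v.2 \/
                      nat_of_ord v.2 < nat_of_ord p.2 by ll.
    + exfalso; move/negP: nlv; apply; apply/leftP.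
      exists p; [exact pT | sp; [by rewrite -e ew1 | exact h1]].
    + exfalso; move/negP: pv; apply; apply/eqP; apply: pos_eq; last exact h2.
      by ovals; rewrite -e ew1.
    + exists v; [exact vT | sp; [by rewrite -e ew1 | exact h3]].
  - case: (eqVneq q v) => [qv|qv]; last first.
      exists q; [exact (inT2 _ qv qT) | exact (conj e l)].
    rewrite qv in e l; exists w; first exact wT'.
    have := rowr p pT (esym e) pv.
    move=> h; sp; [by rewrite ew1 e | exact h].
have hbw : hb T' w.
  apply/belowP; exists u2; first by apply: (inT2 _ _ u2T); apply: neq_pos; right; ll.
  sp; [exact e2 | ll].
have hrw : hr T' w.
  apply/rightP; exists rr; [exact (inT2 _ rrv rrT) | sp; [by rewrite ew1 | exact wrr]].
have aw : has_above T' w.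
  apply/aboveP; exists u1; first by apply: (inT2 _ _ u1T); apply: neq_pos; right; ll.
  sp; [exact e1 | ll].
have nlw : ~~ has_left T' w.
  apply/negP => /leftP[q qT [e l]]; move: qT; rewrite inT' => /orP[/eqP qw|/andP[qv qT]].
    rewrite qw in l; ll.
  have := rowr q qT (etrans e ew1) qv; ll.
split.
- split.
  + exists rt; last exact rtr. apply: inT2 rtT; apply: neq_pos; left.
    have := root_vals rtr; ll.
  + move=> p; rewrite inT' => /orP[/eqP ->|/andP[pv pT]] nrp.
      by rewrite aw (negbTE nlw).
    rewrite Ha // Hl //; exact (X p pT nrp).
  + move=> p; rewrite inT' => /orP[/eqP ->|/andP[pv pT]].
      by rewrite hbw hrw.
    by rewrite Hhb // Hhr // B.
  + move=> i; have [j e] := R i; case: (eqVneq (i, j) v) => [ev|nv]; last first.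
      by exists j; apply: inT2.
    exists w.2; have -> : (i, w.2) = w.
      apply: pos_eq => //=; have := f_equal (fun x : pos => nat_of_ord x.1) ev; simpl.
      by move=> ->; ovals; rewrite ew1.
    exact wT'.
  + move=> j; have [i e] := C j; case: (eqVneq (i, j) v) => [ev|nv]; last first.
      by exists i; apply: inT2.
    exists a.1; have -> : (a.1, j) = a.
      apply: pos_eq => //=; have := f_equal (fun x : pos => nat_of_ord x.2) ev; simpl.
      by move=> ->; ovals; rewrite ea.
    exact (inT2 _ av aT).
- move=> p; case: (eqVneq p w) => [->|pw].
    by rewrite wT' hbw (negbTE wnT).
  case: (eqVneq p v) => [->|pv].
    have vw : v != w by rewrite eq_sym.
    by rewrite inT' (negbTE vw) eqxx /= vT hbv.
  rewrite inT' (negbTE pw) pv /=; case pT: (p \in T) => //=.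
  by rewrite Hhb.
- apply/negP => /eqP e; move/negP: wnT; apply; rewrite -e; exact wT'.
Qed.
End Moves.


Section Cases.
Variable n : nat.
Notation pos := ('I_n * 'I_n)%type.
Implicit Types (T : {set pos}) (p q r v w b u x : pos).

Definition leafT T p := (p \in T) && ~~ hb T p.

Lemma exmax (A : pred pos) (f : pos -> nat) q0 :
  A q0 -> exists2 q, A q & forall r, A r -> f r <= f q.
Proof. by move=> Aq0; case: (arg_maxnP f Aq0) => q Aq Hq; exists q. Qed.

Lemma caseA T (m c0 r0 : 'I_n) : good T -> 0 < m -> c0 < m ->
  (forall p, p \in T -> p.1 < m -> p.1 != r0 -> p.2 < m) ->
  (forall p, p \in T -> p.1 = m -> p.2 < m -> p.2 = c0) ->
  (exists2 q : pos, q \in T & q.2 = c0 /\ q.1 < m) ->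
  (exists2 q : pos, q \in T & q.2 = c0 /\ m < q.1) ->
  (m, c0) \notin T ->
  exists T', [/\ good T', forall p, leafT T' p = leafT T p & T' != T].
Proof.
move=> G m0 cm F1 H5 [u1 u1T [e1 l1]] [u2 u2T [e2 l2]] H4.
have G' := G; case: G' => [_ X B R C].
have [j ej] := R m.
case: (@exmin n (fun q : pos => (q \in T) && (q.1 == m)) (fun q : pos => nat_of_ord q.2) (m, j))
  => [|x /andP[xT /eqP x1] minx]; first by rewrite ej eqxx.
have xm : nat_of_ord m <= nat_of_ord x.2.
  rewrite leqNgt; apply/negP => lt; have := H5 x xT x1 lt => x2.
  move/negP: H4; apply; have -> : (m, c0) = x by apply: pos_eq; ovals; rewrite /= ?x1 ?x2.
  exact xT.
have nrx : ~~ is_root x by apply: nonroot_row; rewrite x1.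
have nlx : ~~ has_left T x.
  apply/negP => /leftP[q qT [e l]]; have := minx q; rewrite qT e x1 eqxx => /(_ isT); ll.
have hax : has_above T x by move: (X x xT nrx); rewrite (negbTE nlx) addbF.
have [q0 q0T [e0 l0]] := aboveP _ _ hax.
case: (@exmax (fun q : pos => (q \in T) && (q.2 == x.2) && (q.1 < x.1)) (fun q : pos => nat_of_ord q.1) q0)
  => [|v /andP[/andP[vT /eqP v2] v1] maxv]; first by rewrite q0T e0 eqxx l0.
have vm : nat_of_ord v.1 < nat_of_ord m by rewrite -x1.
have vr0 : v.1 = r0.
  case: (eqVneq v.1 r0) => [//|ne]; exfalso.
  have := F1 v vT vm ne; ll.
have nav : ~~ has_above T v.
  apply/negP => /aboveP[q qT [e l]]; have := F1 q qT.
  have lqm : nat_of_ord q.1 < nat_of_ord m by ll.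
  move=> /(_ lqm); case: (eqVneq q.1 r0) => [qr|qr] //.
    rewrite qr -vr0 in l; ll.
  move=> /(_ isT); ll.
have nrv : ~~ is_root v by apply: nonroot_col; ll.
have hlv : has_left T v by move: (X v vT nrv); rewrite (negbTE nav).
have S1 : forall r : pos, r \in T -> r.2 = v.2 -> v.1 < r.1 -> x.1 <= r.1.
  move=> r rT er lr; rewrite leqNgt; apply/negP => lrx.
  have := maxv r; rewrite rT er v2 eqxx lrx /= => /(_ isT); ll.
have S2 : (m, c0).1 = x.1 by rewrite x1.
have S3 : (m, c0).2 < v.2 by simpl; ll.
have S4 : exists2 u : pos, u \in T & u.2 = (m, c0).2 /\ u.1 < x.1.
  exists u1; [exact u1T | refine (conj e1 _); rewrite x1; exact l1].
have S5 : exists2 u : pos, u \in T & u.2 = (m, c0).2 /\ x.1 < u.1.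
  exists u2; [exact u2T | refine (conj e2 _); rewrite x1; exact l2].
have [G1 L1 N1] := @moveA n T v x (m, c0) G vT hlv xT (esym v2) v1 S1 S2 S3 S4 S5. exists ((m, c0) |: (T :\ v)); split; [exact G1 | move=> p; rewrite /leafT; exact (L1 p) | exact N1].
Qed.

Lemma caseC T (m c0 r0 : 'I_n) : good T -> c0 < m -> r0 < m ->
  (m, c0) \in T -> (r0, m) \in T -> hb T (m, c0) ->
  (forall p, p \in T -> p.1 = m -> p.2 < m -> p.2 = c0) ->
  (exists2 q : pos, q \in T & q.2 = c0 /\ q.1 < m) ->
  (exists2 q : pos, q \in T & q.2 = m /\ m < q.1) ->
  exists T', [/\ good T', forall p, leafT T' p = leafT T p & T' != T].
Proof.
move=> G cm rm vT rT hbv H5 [u1 u1T [e1 l1]] [u2 u2T [e2 l2]].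
have G' := G; case: G' => [_ X B R C].
have hav : has_above T (m, c0) by apply/aboveP; exists u1; [exact u1T | exact (conj e1 l1)].
have mmT : (m, m) \notin T.
  apply/negP => mT; have nr : ~~ is_root (m, m) by apply: nonroot_row; simpl; ll.
  have := X _ mT nr.
  have -> : has_above T (m, m) by apply/aboveP; exists (r0, m); [exact rT | sp; [by [] | exact rm]].
  by have -> : has_left T (m, m) by apply/leftP; exists (m, c0); [exact vT | sp; [by [] | exact cm]].
have S1 : nat_of_ord (m, m).2 <> nat_of_ord (m, c0).2 by simpl; ll.
have S2 : forall q : pos, q \in T -> q.1 = (m, c0).1 -> q != (m, c0) -> (m, m).2 < q.2.
  move=> q qT e qv; rewrite /= ltnNge; apply/negP => le.
  have [lt|eq] : nat_of_ord q.2 < nat_of_ord m \/ nat_of_ord q.2 = nat_of_ord m by ll.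
    have := H5 q qT e lt => e2'; move/negP: qv; apply; apply/eqP.
    by apply: pos_eq; ovals; rewrite /= ?e ?e2'.
  move/negP: mmT; apply; have <- : q = (m, m) by apply: pos_eq; ovals; rewrite /= ?e ?eq.
  exact qT.
have S3 : exists2 u : pos, u \in T & u.2 = (m, m).2 /\ u.1 < (m, c0).1.
  exists (r0, m); [exact rT | sp; [by [] | exact rm]].
have S4 : exists2 u : pos, u \in T & u.2 = (m, m).2 /\ (m, c0).1 < u.1.
  exists u2; [exact u2T | exact (conj e2 l2)].
have [G1 L1 N1] := @moveC n T (m, c0) (m, m) G vT hav hbv (erefl _) S1 S2 S3 S4. exists ((m, m) |: (T :\ (m, c0))); split; [exact G1 | move=> p; rewrite /leafT; exact (L1 p) | exact N1].
Qed.

Lemma leafT_trs T p : good T -> leafT (trs T) p = leafT T (swp p).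
Proof.
case=> _ _ B _ _; rewrite /leafT in_trs hb_trs; case pT: (swp p \in T) => //=.
by rewrite B.
Qed.
End Cases.


Section Another.
Variable n : nat.
Notation pos := ('I_n * 'I_n)%type.
Implicit Types (T : {set pos}) (p q r v w b u x : pos).

Lemma top_col T (c : 'I_n) : good T -> exists2 t : pos, t \in T & t.2 = c /\ ~~ has_above T t.
Proof.
case=> _ _ _ _ C; have [i ei] := C c.
case: (@exmin n (fun q : pos => (q \in T) && (q.2 == c)) (fun q : pos => nat_of_ord q.1) (i, c))
  => [|t /andP[tT /eqP t2] mint]; first by rewrite ei eqxx.
exists t; [exact tT | refine (conj t2 _)].
apply/negP => /aboveP[q qT [e l]]; have := mint q; rewrite qT e t2 eqxx => /(_ isT); ll.
Qed.

Lemma left_row T (r : 'I_n) : good T -> exists2 t : pos, t \in T & t.1 = r /\ ~~ has_left T t.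
Proof.
case=> _ _ _ R _; have [j ej] := R r.
case: (@exmin n (fun q : pos => (q \in T) && (q.1 == r)) (fun q : pos => nat_of_ord q.2) (r, j))
  => [|t /andP[tT /eqP t1] mint]; first by rewrite ej eqxx.
exists t; [exact tT | refine (conj t1 _)].
apply/negP => /leftP[q qT [e l]]; have := mint q; rewrite qT e t1 eqxx => /(_ isT); ll.
Qed.

Lemma another T (m c0 r0 : 'I_n) :
  good T -> 0 < m -> c0 < m -> r0 < m ->
  (forall p, p \in T -> p.1 < m -> p.1 != r0 -> p.2 < m) ->
  (forall p, p \in T -> p.2 < m -> p.2 != c0 -> p.1 < m) ->
  (exists2 q : pos, q \in T & q.2 = c0 /\ m < q.1) ->
  (exists2 q : pos, q \in T & q.1 = r0 /\ m < q.2) ->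
  (exists2 q : pos, q \in T & q.2 = m /\ m < q.1) ->
  ((m, c0) \in T -> hb T (m, c0)) ->
  exists T', [/\ good T', forall p, leafT T' p = leafT T p & T' != T].
Proof.
move=> G m0 cm rm F1 F1' H3 H3' Hcm Hrow.
have G' := G; case: G' => [_ X B R C].
have H5 : forall p, p \in T -> p.1 = m -> p.2 < m -> p.2 = c0.
  move=> p pT e l; case: (eqVneq p.2 c0) => [//|ne]; have := F1' p pT l ne; ll.
have H5' : forall p, p \in T -> p.2 = m -> p.1 < m -> p.1 = r0.
  move=> p pT e l; case: (eqVneq p.1 r0) => [//|ne]; have := F1 p pT l ne; ll.
have H2 : exists2 q : pos, q \in T & q.2 = c0 /\ q.1 < m.
  have [t tT [t2 nat]] := top_col c0 G.
  exists t; first exact tT; refine (conj t2 _).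
  case: (boolP (is_root t)) => [rt|nrt]; first by have := root_vals rt; ll.
  have := X t tT nrt; rewrite (negbTE nat) /= => /leftP[q qT [e l]].
  have qc : q.2 != c0 by apply/eqP => qc; rewrite qc -t2 in l; ll.
  have := F1' q qT; rewrite t2 in l => /(_ (ltn_trans l cm) qc); ll.
have H2' : exists2 q : pos, q \in T & q.1 = r0 /\ q.2 < m.
  have [t tT [t1 nlt]] := left_row r0 G.
  exists t; first exact tT; refine (conj t1 _).
  case: (boolP (is_root t)) => [rt|nrt]; first by have := root_vals rt; ll.
  have := X t tT nrt; rewrite (negbTE nlt) addbF => /aboveP[q qT [e l]].
  have qc : q.1 != r0 by apply/eqP => qc; rewrite qc -t1 in l; ll.
  have := F1 q qT; rewrite t1 in l => /(_ (ltn_trans l rm) qc); ll.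
case: (boolP ((m, c0) \in T)) => [mcT|mcT]; last first.
  exact: (caseA G m0 cm F1 H5 H2 H3 mcT).
case: (boolP ((r0, m) \in T)) => [rmT|rmT].
  exact: (caseC G cm rm mcT rmT (Hrow mcT) H5 H2 Hcm).
have Gt := good_trs G.
have F1t : forall p, p \in trs T -> p.1 < m -> p.1 != c0 -> p.2 < m.
  by move=> p; rewrite in_trs => pT l ne; exact: (F1' _ pT l ne).
have H5t : forall p, p \in trs T -> p.1 = m -> p.2 < m -> p.2 = r0.
  by move=> p; rewrite in_trs => pT e l; exact: (H5' _ pT e l).
have H2t : exists2 q : pos, q \in trs T & q.2 = r0 /\ q.1 < m.
  by case: H2' => q qT [e l]; exists (swp q); [rewrite in_trs swpK | exact (conj e l)].
have H3t : exists2 q : pos, q \in trs T & q.2 = r0 /\ m < q.1.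
  by case: H3' => q qT [e l]; exists (swp q); [rewrite in_trs swpK | exact (conj e l)].
have H4t : (m, r0) \notin trs T by rewrite in_trs.
have [T2 [G2 L2 N2]] := caseA Gt m0 rm F1t H5t H2t H3t H4t.
exists (trs T2); split.
- exact: good_trs.
- by move=> p; rewrite leafT_trs // L2 leafT_trs // swpK.
- apply/negP => /eqP e; move/negP: N2; apply; by rewrite -e trsK.
Qed.

Lemma boundT T (k : 'I_n) : good T -> 0 < k ->
  (forall p, p \in T -> p.1 < k -> p.2 < k) ->
  (forall p, p \in T -> p.2 < k -> p.1 < k) -> False.
Proof.
move=> G k0 H1 H2; have G' := G; case: G' => [_ X B R C].
have [j ej] := R k.
have jk : k <= j by rewrite leqNgt; apply/negP => l; have := H2 _ ej l; simpl; ll.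
case: (@exmin n (fun q : pos => [&& q \in T, k <= q.1 & k <= q.2])
   (fun q : pos => nat_of_ord q.1 + nat_of_ord q.2) (k, j))
  => [|q /and3P[qT q1 q2] minq]; first by rewrite ej leqnn jk.
have nrq : ~~ is_root q by apply: nonroot_row; ll.
have := X q qT nrq; case: (boolP (has_above T q)) => [/aboveP[u uT [e l]] _|_ /= /leftP[u uT [e l]]].
- have uk : k <= u.1 by rewrite leqNgt; apply/negP => uk; have := H1 u uT uk; ll.
  have := minq u; rewrite uT uk /= => /(_ _); rewrite e => /(_ q2); ll.
- have uk : k <= u.2 by rewrite leqNgt; apply/negP => uk; have := H2 u uT uk; ll.
  have := minq u; rewrite uT uk /= andbT => /(_ _); rewrite e => /(_ q1); ll.
Qed.
End Another.


Section Counting.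
Variable n : nat.
Notation pos := ('I_n * 'I_n)%type.
Variables (s : 'S_n) (T : {set pos}).
Hypothesis G : good T.
Hypothesis LF : forall i j, leafT T (i, j) = (s i == j).

Lemma L1 i : ((i, s i) \in T) /\ ~~ hb T (i, s i).
Proof. by have := LF i (s i); rewrite eqxx /leafT => /andP. Qed.

Lemma L2 (p : pos) : p \in T -> p.2 <= s p.1.
Proof.
move=> pT; rewrite leqNgt; apply/negP => l.
have [iT nb] := L1 p.1; have := G; case=> _ _ B _ _.
move/negP: nb; apply; rewrite B //; apply/rightP; exists p; [exact pT | exact (conj (erefl _) l)].
Qed.

Lemma L3 (p : pos) : p \in T -> p.1 <= (s^-1)%g p.2.
Proof.
move=> pT; rewrite leqNgt; apply/negP => l.
have [iT nb] := L1 ((s^-1)%g p.2); rewrite permKV in iT nb.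
move/negP: nb; apply; apply/belowP; exists p; [exact pT | exact (conj (erefl _) l)].
Qed.

Definition Kset k := [set i : 'I_n | i < k].
Definition Gs k := [set i : 'I_n | (i < k) && (s i < k)].
Definition Cs k := [set j : 'I_n | (j < k) && ((s^-1)%g j < k)].

Lemma cardK k : k <= n -> #|Kset k| = k.
Proof.
elim: k => [|k IH] hk.
  by apply/eqP; rewrite cards_eq0; apply/eqP/setP => i; rewrite !inE.
have -> : Kset k.+1 = (Ordinal hk) |: Kset k.
  apply/setP => i; rewrite !inE; case: (eqVneq i (Ordinal hk)) => [->|ne] /=; first by rewrite ltnSn.
  have ne' : nat_of_ord i != k by apply: contra ne => /eqP e; apply/eqP/val_inj.
  by rewrite ltnS leq_eqVlt (negbTE ne').
rewrite cardsU1 IH; last exact: ltnW.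
by rewrite inE /= ltnn.
Qed.

Lemma GsK k : Gs k \subset Kset k.
Proof. by apply/subsetP => i; rewrite !inE => /andP[]. Qed.
Lemma CsK k : Cs k \subset Kset k.
Proof. by apply/subsetP => i; rewrite !inE => /andP[]. Qed.
Lemma GsS k : Gs k \subset Gs k.+1.
Proof. apply/subsetP => i; rewrite !inE => /andP[a b]; apply/andP; split; ll. Qed.

Lemma CsE k : Cs k = s @: Gs k.
Proof.
apply/setP => j; rewrite -{2}(permKV s j) mem_imset; last exact: perm_inj.
by rewrite !inE permKV andbC.
Qed.
Lemma cardCs k : #|Cs k| = #|Gs k|.
Proof. by rewrite CsE card_imset //; exact: perm_inj. Qed.

Lemma boundG k : 0 < k -> k < n -> #|Gs k| < k.
Proof.
move=> k0 kn; rewrite ltnNge; apply/negP => le.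
have eG : Gs k = Kset k.
  by apply/eqP; rewrite eqEcard GsK cardK ?le // ltnW.
have eC : Cs k = Kset k.
  by apply/eqP; rewrite eqEcard CsK cardK ?cardCs ?le // ltnW.
apply: (@boundT n T (Ordinal kn) G k0).
- move=> p pT l; have := L2 pT.
  have : p.1 \in Gs k by rewrite eG inE.
  rewrite inE => /andP[_ h]; simpl in *; ll.
- move=> p pT l; have := L3 pT.
  have : p.2 \in Cs k by rewrite eC inE.
  rewrite inE => /andP[_ h]; simpl in *; ll.
Qed.

Hypothesis NO : ~ exists T', [/\ good T', forall p, leafT T' p = leafT T p & T' != T].

Lemma hook_nonempty m : 0 < m -> m.+1 < n -> #|Gs m| = m.-1 -> #|Gs m.+1| = m.-1 -> False.
Proof.
move=> m0 mn cG cG1.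
have eG : Gs m.+1 = Gs m.
  by apply/esym/eqP; rewrite eqEcard GsS cG cG1 leqnn.
have E (i : 'I_n) : i <= m -> s i <= m -> (i < m) && (s i < m).
  move=> a b; have : i \in Gs m.+1 by rewrite inE !ltnS a b.
  by rewrite eG inE.
have mlt : m < n by ll.
pose mo := Ordinal mlt.
have cD : #|Kset m :\: Gs m| == 1.
  by rewrite cardsDS ?GsK // cardK ?cG; [apply/eqP; ll | ll].
have [r0 eD] := cards1P cD.
have r0D : r0 \in Kset m :\: Gs m by rewrite eD set11.
move: (r0D); rewrite !inE => /andP[/negP nr r0m]; rewrite r0m /= in nr.
have sr0 : m < s r0.
  rewrite ltnNge; apply/negP => le; have := E r0 (ltnW r0m) le; rewrite r0m /=; ll.
have Rr (i : 'I_n) : i < m -> i != r0 -> s i < m.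
  move=> im ne; apply/negPn/negP => h.
  have : i \in Kset m :\: Gs m by rewrite !inE im h.
  by rewrite eD inE (negbTE ne).
have cD' : #|Kset m :\: Cs m| == 1.
  by rewrite cardsDS ?CsK // cardK ?cardCs ?cG; [apply/eqP; ll | ll].
have [c0 eD'] := cards1P cD'.
have c0D : c0 \in Kset m :\: Cs m by rewrite eD' set11.
move: (c0D); rewrite !inE => /andP[/negP nc c0m]; rewrite c0m /= in nc.
have sc0 : m < (s^-1)%g c0.
  rewrite ltnNge; apply/negP => le; have := E _ le; rewrite permKV (ltnW c0m) => /(_ isT).
  rewrite c0m andbT => h; apply: nc; exact h.
have Cc (j : 'I_n) : j < m -> j != c0 -> (s^-1)%g j < m.
  move=> jm ne; apply/negPn/negP => h.
  have : j \in Kset m :\: Cs m by rewrite !inE jm h.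
  by rewrite eD' inE (negbTE ne).
have smo : m < s mo.
  rewrite ltnNge; apply/negP => le; have := E mo (leqnn _) le; rewrite /= ltnn; done.
have sim : m < (s^-1)%g mo.
  rewrite ltnNge; apply/negP => le; have := E _ le; rewrite permKV /= leqnn => /(_ isT).
  by rewrite ltnn andbF.
apply: NO; apply: (@another n T mo c0 r0 G m0 c0m r0m).
- move=> p pT l ne; have := L2 pT; have := Rr _ l ne; simpl; ll.
- move=> p pT l ne; have := L3 pT; have := Cc _ l ne; simpl; ll.
- exists ((s^-1)%g c0, c0); last by split => //.
  by have [h _] := L1 ((s^-1)%g c0); rewrite permKV in h.
- exists (r0, s r0); last by split => //.
  by have [h _] := L1 r0.
- exists ((s^-1)%g mo, mo); last by split => //.
  by have [h _] := L1 ((s^-1)%g mo); rewrite permKV in h.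
- move=> mcT; case: (boolP (hb T (mo, c0))) => [//|nb]; exfalso.
  have : leafT T (mo, c0) by rewrite /leafT mcT nb.
  rewrite LF => /eqP e; rewrite e in smo; simpl in smo; ll.
Qed.

Lemma cardGs m : 0 < m -> m < n -> #|Gs m| = m.-1.
Proof.
elim: m => [//|m IH] _ mn.
case: (posnP m) => [m0|m0].
  by rewrite m0 in mn *; have := boundG (ltn0Sn 0) mn; ll.
have IHm := IH m0 (ltnW mn).
have h1 := subset_leq_card (GsS m).
have h2 := boundG (ltn0Sn m) mn.
case: (eqVneq #|Gs m.+1| m.-1) => [e|ne].
  exfalso; exact: (hook_nonempty m0 mn IHm e).
have ne2 : (#|Gs m.+1| : nat) <> m.-1 by apply/eqP.
rewrite IHm in h1; clear -ne2 h1 h2 m0; lia.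
Qed.
End Counting.

Unset Implicit Arguments.
Local Open Scope ring_scope.

Lemma permE (n : nat) (s : 'S_n) (i j : 'I_n) : ((perm_mx s : 'M[int]_n) i j == 1) = (s i == j).
Proof. by rewrite perm_mxEsub !mxE; case: (s i == j). Qed.

Lemma if01 (b c : bool) : (if b then 1 else 0 : int) = 1 *+ c -> b = c.
Proof. by case: b; case: c => //= /eqP. Qed.

Theorem lemma3p3 (n : nat) (P : 'M[int]_n) :
  (2 <= n)%N ->
  is_perm_mx P ->
  (exists! M : 'M[int]_n, is_cnm M /\ leaf_mx M = P) ->
  forall k : nat, (2 <= k <= n - 1)%N ->
    #|[set p in Lsubset n k | P p.1 p.2 == 1]| = 1%N.
Proof.
move=> n2 /is_perm_mxP[s ->] [M [[cM lM] U]] k hk.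
have G : good (Defs.support M) := cnm_good cM.
have LF : forall i j, leafT (Defs.support M) (i, j) = (s i == j).
  move=> i j; have := congr1 (fun A : 'M[int]_n => A i j) lM.
  rewrite /leaf_mx perm_mxEsub !mxE (leafE _ G) /leafT; exact: if01.
have NO : ~ exists T', [/\ good T', forall p, leafT T' p = leafT (Defs.support M) p & T' != Defs.support M].
  case=> T' [G' L' N'].
  have cM' := good_cnm G'.
  have G'' : good (Defs.support (mxT T')) by rewrite support_mxT.
  have lM' : leaf_mx (mxT T') = perm_mx s.
    rewrite -lM; apply/matrixP => i j; rewrite !mxE (leafE _ G) (leafE _ G'').
    by rewrite support_mxT; have := L' (i, j); rewrite /leafT => ->.
  have eM := U (mxT T') (conj cM' lM').
  by move/negP: N'; apply; apply/eqP; rewrite eM support_mxT.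
have cG := cardGs G LF NO.
have k2 : (2 <= k)%N by case/andP: hk.
have kn : (k < n)%N by case/andP: hk => _ h; clear -h n2; lia.
have -> : [set p in Lsubset n k | (perm_mx s : 'M[int]_n) p.1 p.2 == 1] =
          [set (i, s i) | i in Gs s k :\: Gs s k.-1].
  apply/setP => p; apply/idP/imsetP.
  - rewrite !inE permE => /andP[pL /eqP e]; exists p.1; last by rewrite e; case: p {pL e}.
    rewrite !inE; move: pL; rewrite -e /=; clear -k2; lia.
  - case=> i; rewrite !inE => h ->; rewrite /= permE eqxx andbT; move: h; clear -k2; lia.
rewrite card_imset; last by move=> i j [].
rewrite cardsDS; last by have := GsS s k.-1; rewrite prednK //; clear -k2; lia.
rewrite !cG; clear -k2 kn; lia.
Qed.
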